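(* For every $q\in X^*\setminus\{e\}$, the star root $\sqrt[*]{P_q}$ is a suffix code, i.e. no word of $\sqrt[*]{P_q}$ is a proper suffix of another word of $\sqrt[*]{P_q}$.
   Context: $X$ is a finite alphabet; $X^*$ the finite words (empty word $e$); $w\sqsubseteq\eta$ means $w$ is a prefix of $\eta$, $w\sqsubset\eta$ a proper prefix. $P_q:=\{v: e\sqsubset v\sqsubseteq q\sqsubset v\cdot q\}$. The star root of $P_q$ is $\sqrt[*]{P_q}:=P_q\setminus(P_q^2\cdot P_q^* )$, i.e. the elements of $P_q$ that are not a concatenation of two or more elements of $P_q$. *)

(* Defs.v *)
From mathcomp Require Import all_boot.
Set Implicit Arguments. Unset Strict Implicit. Unset Printing Implicit Defensive.

Definition proper_prefix (X : eqType) (w eta : seq X) : bool :=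
  prefix w eta && (w != eta).

Definition Pq (X : eqType) (q : seq X) (v : seq X) : Prop :=
  proper_prefix [::] v /\ prefix v q /\ proper_prefix q (v ++ q).

Definition in_P2Pstar (X : eqType) (P : seq X -> Prop) (v : seq X) : Prop :=
  exists s : seq (seq X), 2 <= size s /\ (forall u, u \in s -> P u) /\ flatten s = v.

Definition star_root (X : eqType) (P : seq X -> Prop) (v : seq X) : Prop :=
  P v /\ ~ in_P2Pstar P v.

Definition suffix_code (X : eqType) (C : seq X -> Prop) : Prop :=
  forall u w, C u -> C w -> ~ (suffix u w /\ u != w).

(* Main.v *)
Require Import Defs.
From mathcomp Require Import all_boot.

Lemma prefix_common (X : eqType) (a b c : seq X) :
  prefix a c -> prefix b c -> size a <= size b -> prefix a b.
Proof.
rewrite !prefixE => /eqP Ha /eqP Hb Hs.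
by rewrite -Hb take_takel // Ha.
Qed.

Theorem corollary5 (X : finType) (q : seq X) :
  q != [::] -> suffix_code (star_root (Pq q)).
Proof.
move=> _ u w [Hu _] [[Hw0 [Hwq Hqw]] Hroot] [/suffixP [x Hx] Hne]; have [_ [Huq Hqu]] := Hu.
apply: Hroot; exists [:: x; u]; split => //; split; last by rewrite /= cats0 Hx.
have Hx0 : x != [::] by apply: contra Hne; rewrite Hx => /eqP ->.
move=> v; rewrite !inE => /orP [/eqP ->|/eqP ->]; last first.
  exact: Hu.
split; first by rewrite /proper_prefix prefix0s eq_sym.
split; first by apply: (@catl_prefix _ x q u); rewrite -Hx.
rewrite /proper_prefix; apply/andP; split.
  move: Hqu => /andP [/prefixP [r Hr] _].
  move: Hqw => /andP [Hq _].
  apply: (@prefix_common _ q (x ++ q) (x ++ u ++ q)).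
  - by rewrite catA -Hx.
  - by rewrite Hr catA prefix_prefix.
  - by rewrite size_cat leq_addl.
apply/eqP => /(congr1 size); rewrite size_cat => /eqP.
rewrite -{1}[size q]add0n eqn_add2r eq_sym size_eq0.
by apply/negP.
Qed.
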